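(* Let $X_0$ be a smooth closed curve which is star-shaped with respect to a point $O$ (taken as origin), so that in polar coordinates $X_0(\theta)=r_0(\theta)(\cos\theta,\sin\theta)$ with $r_0>0$. Let $r:[0,2\pi]\times[0,\omega)\to(0,\infty)$ be a smooth solution, $2\pi$-periodic in $\theta$, of $$\frac{\partial r}{\partial t}=\frac{1}{g^2}\frac{\partial^2 r}{\partial\theta^2}-\frac{2}{rg^2}\left(\frac{\partial r}{\partial\theta}\right)^2-\frac{r}{g^2}+\frac{2\pi g}{rL},\qquad r(\theta,0)=r_0(\theta),$$ where $g=\sqrt{r^2+(\partial r/\partial\theta)^2}$ and $L(t)=\int_0^{2\pi}g(\theta,t)\,d\theta$, so that $X(\theta,t)=r(\theta,t)(\cos\theta,\sin\theta)$ solves Gage's area-preserving flow up to a tangential reparametrization. If $r(\theta,t)\ge c>0$ for all $(\theta,t)\in[0,2\pi]\times[0,\omega)$ for some constant $c$, then for all such $(\theta,t)$ $$r(\theta,t)\le \frac{L_0}{2},\qquad \left|\frac{\partial r}{\partial\theta}(\theta,t)\right|\le C_1,$$ where $L_0$ is the length of $X_0$ and $C_1=\max\left\{\max_\theta\left|\frac{\partial r}{\partial\theta}(\theta,0)\right|,\frac{3L_0}{\pi}\right\}$.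
   Context: Gage's area-preserving flow: $\frac{\partial X}{\partial t}=\left(\kappa-\frac{2\pi}{L}\right)N$, where $\kappa$ is the curvature, $N$ the inward unit normal, $L$ the length of the evolving curve. A closed curve is star-shaped with respect to the origin $O$ if $\det(X(s),T(s))>0$ for all arc length parameters $s$, $T$ the unit tangent. All curves are regular, closed and embedded. *)

(* Defs.v *)
From Stdlib Require Import Reals Lra List.
From Coquelicot Require Import Coquelicot.
Open Scope R_scope.

Definition Dth (f : R -> R -> R) : R -> R -> R :=
  fun th t => Derive (fun x => f x t) th.
Definition Dt (f : R -> R -> R) : R -> R -> R :=
  fun th t => Derive (fun s => f th s) t.

(* Iterated partial derivative along a word of directions
   (true = d/dt, false = d/dtheta). *)
Fixpoint iterD (w : list bool) (f : R -> R -> R) : R -> R -> R :=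
  match w with
  | nil => f
  | b :: w' => (if b then Dt else Dth) (iterD w' f)
  end.

Definition smooth_on (U : R -> R -> Prop) (f : R -> R -> R) : Prop :=
  forall (w : list bool) (th t : R), U th t ->
    ex_derive (fun x => iterD w f x t) th /\
    ex_derive (fun s => iterD w f th s) t /\
    continuous (fun p : R * R => iterD w f (fst p) (snd p)) (th, t).

Definition gfun (r : R -> R -> R) (th t : R) : R :=
  sqrt (r th t ^ 2 + Dth r th t ^ 2).

Definition Lfun (r : R -> R -> R) (t : R) : R :=
  RInt (fun th => gfun r th t) 0 (2 * PI).

Definition gage_rhs (r : R -> R -> R) (th t : R) : R :=
  let g := gfun r th t in
  / (g ^ 2) * Dth (Dth r) th t
  - 2 / (r th t * g ^ 2) * (Dth r th t) ^ 2
  - r th t / g ^ 2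
  + 2 * PI * g / (r th t * Lfun r t).

Definition max_abs_dr0 (r : R -> R -> R) : R :=
  real (Lub_Rbar (fun y => exists th, 0 <= th <= 2 * PI /\ y = Rabs (Dth r th 0))).

(* Main.v *)
Require Import Defs.
From Stdlib Require Import Reals.
From Coquelicot Require Import Coquelicot.
Open Scope R_scope.
From Stdlib Require Import Lra Lia List.

Lemma c2d_swap f x y : continuity_2d_pt f x y -> continuity_2d_pt (fun u v => f v u) y x.
Proof.
  intros H eps. destruct (H eps) as [d Hd]. exists d. intros u v Hu Hv. now apply Hd.
Qed.

Lemma c2d_1 f x y : continuity_2d_pt f x y -> continuity_pt (fun u => f u y) x.
Proof.
  intros H. apply continuity_pt_locally. intros eps.
  destruct (H eps) as [d Hd]. exists d. intros u Hu. apply Hd. exact Hu.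
  rewrite Rminus_eq_0, Rabs_R0. apply cond_pos.
Qed.

Lemma c2d_2 f x y : continuity_2d_pt f x y -> continuity_pt (fun v => f x v) y.
Proof.
  intros H. apply continuity_pt_locally. intros eps.
  destruct (H eps) as [d Hd]. exists d. intros u Hu. apply Hd.
  rewrite Rminus_eq_0, Rabs_R0. apply cond_pos. exact Hu.
Qed.

Lemma c2d_sqrt f x y : continuity_2d_pt f x y -> continuity_2d_pt (fun u v => sqrt (f u v)) x y.
Proof.
  intros H. apply (continuity_1d_2d_pt_comp sqrt f). apply continuity_pt_filterlim, continuous_sqrt. exact H.
Qed.

(* closedness via uniform continuity *)
Lemma closed_max (F : R -> R -> R) a b t0 C : a <= b ->
  (forall th, a <= th <= b -> continuity_2d_pt F th t0) ->
  (forall eps, 0 < eps -> exists th t, a <= th <= b /\ Rabs (t - t0) < eps /\ C <= F th t) ->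
  exists th, a <= th <= b /\ C <= F th t0.
Proof.
  intros Hab Hc Hn.
  destruct (continuity_ab_maj (fun th => F th t0) a b Hab) as [m [Hm1 Hm2]].
  { intros c Hc'. apply c2d_1. now apply Hc. }
  exists m. split; [exact Hm2|].
  apply Rnot_lt_le. intros Hlt.
  set (e := mkposreal _ (Rlt_Rminus _ _ Hlt)).
  destruct (uniform_continuity_2d_1d F a b t0 Hc e) as [d Hd].
  pose proof (cond_pos d) as Hdp.
  destruct (Hn d (cond_pos d)) as [th [t [Hth [Ht HC]]]].
  assert (H1 := Hd th t0 th t Hth ltac:(lra) Hth).
  assert (Ht' : t0 - d <= t <= t0 + d) by (apply Rabs_lt_between' in Ht; lra).
  specialize (H1 Ht'). rewrite Rminus_eq_0, Rabs_R0 in H1. specialize (H1 (cond_pos d)).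
  assert (H2 := Hm1 th Hth). simpl in H1, e. apply Rabs_lt_between in H1. simpl in *. lra.
Qed.


Lemma cont_mult (f g : R -> R) x : continuous f x -> continuous g x -> continuous (fun y => f y * g y) x.
Proof. intros; now apply (continuous_mult f g). Qed.
Lemma cont_plus (f g : R -> R) x : continuous f x -> continuous g x -> continuous (fun y => f y + g y) x.
Proof. intros; now apply (continuous_plus f g). Qed.
Lemma cont_opp (f : R -> R) x : continuous f x -> continuous (fun y => - f y) x.
Proof. intros; now apply (continuous_opp f). Qed.
Lemma cont_minus (f g : R -> R) x : continuous f x -> continuous g x -> continuous (fun y => f y - g y) x.
Proof. intros; apply cont_plus; auto; now apply cont_opp. Qed.
Lemma cont_const (c x : R) : continuous (fun _ : R => c) x.
Proof. apply continuous_const. Qed.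
Lemma cont_id (x : R) : continuous (fun y : R => y) x.
Proof. apply continuous_id. Qed.
Lemma cont_sqrt (f : R -> R) x : continuous f x -> continuous (fun y => sqrt (f y)) x.
Proof. intros; now apply continuous_sqrt_comp. Qed.
Lemma cont_cos (f : R -> R) x : continuous f x -> continuous (fun y => cos (f y)) x.
Proof. intros; now apply continuous_cos_comp. Qed.
Lemma cont_sin (f : R -> R) x : continuous f x -> continuous (fun y => sin (f y)) x.
Proof. intros; now apply continuous_sin_comp. Qed.

Lemma exRI (f : R -> R) a b : (forall z, Rmin a b <= z <= Rmax a b -> continuous f z) -> ex_RInt f a b.
Proof. exact (ex_RInt_continuous (V := R_CompleteNormedModule) f a b). Qed.

Lemma periodic_reduce (f : R -> R) T : 0 < T -> (forall x, f (x + T) = f x) ->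
  forall x, exists y, 0 <= y < T /\ f x = f y.
Proof.
  intros HT Hp x.
  set (k := (up (x / T) - 1)%Z).
  destruct (archimed (x / T)) as [H1 H2].
  assert (Hk1 : IZR k <= x / T) by (unfold k; rewrite minus_IZR; simpl; lra).
  assert (Hk2 : x / T < IZR k + 1) by (unfold k; rewrite minus_IZR; simpl; lra).
  exists (x - IZR k * T). split.
  - apply Rmult_le_compat_r with (r := T) in Hk1; [|lra].
    apply Rmult_lt_compat_r with (r := T) in Hk2; [|lra].
    unfold Rdiv in *. rewrite Rmult_assoc, Rinv_l in Hk1, Hk2 by lra. lra.
  - assert (Hn : forall n : nat, forall z, f (z + INR n * T) = f z).
    { induction n; intros z. simpl. f_equal; ring.
      rewrite S_INR. replace (z + (INR n + 1) * T) with ((z + INR n * T) + T) by ring.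
      rewrite Hp. apply IHn. }
    destruct (Z.le_gt_cases 0 k) as [Hk|Hk].
    + destruct (IZN k Hk) as [n Hn']. rewrite Hn', <- INR_IZR_INZ.
      rewrite <- (Hn n (x - INR n * T)). f_equal; ring.
    + assert (Hk' : (0 <= - k)%Z) by lia.
      destruct (IZN _ Hk') as [n Hn'].
      replace (IZR k) with (- IZR (- k)) by (rewrite opp_IZR; ring).
      rewrite Hn', <- INR_IZR_INZ. rewrite <- (Hn n x). f_equal; ring.
Qed.

Section Geo.
Variables (rho rho' : R -> R).
Hypothesis Hd : forall th, is_derive rho th (rho' th).
Hypothesis Hc : forall th, continuous rho' th.

Let g th := sqrt (rho th ^ 2 + rho' th ^ 2).

Lemma rho_cont th : continuous rho th.
Proof. exact (ex_derive_continuous (K := R_AbsRing) rho th (ex_intro _ _ (Hd th))). Qed.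

Lemma g_cont th : continuous g th.
Proof.
  unfold g. apply cont_sqrt. apply cont_plus; simpl; apply cont_mult; try apply cont_mult;
  try apply cont_const; try apply rho_cont; apply Hc.
Qed.

Lemma g_int a b : ex_RInt g a b.
Proof. apply exRI. intros; apply g_cont. Qed.

Lemma arc_bound x a b : a <= b ->
  Rabs (rho b * cos (b - x) - rho a * cos (a - x)) <= RInt g a b.
Proof.
  intros Hab.
  set (dphi := fun th => rho' th * cos (th - x) - rho th * sin (th - x)).
  assert (Hdc : forall th, continuous dphi th).
  { intros th. unfold dphi. apply cont_minus; apply cont_mult; try apply Hc; try apply rho_cont.
    apply cont_cos, cont_minus; [apply cont_id | apply cont_const].
    apply cont_sin, cont_minus; [apply cont_id | apply cont_const]. }
  assert (HI : is_RInt dphi a b (rho b * cos (b - x) - rho a * cos (a - x))).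
  { apply (is_RInt_derive (fun th => rho th * cos (th - x))).
    - intros th _. unfold dphi.
      assert (D1: is_derive (fun th => cos (th - x)) th (- sin (th - x))) by (auto_derive; [easy | unfold Rminus; ring]).
      pose proof (is_derive_mult rho _ th _ _ (Hd th) D1 (fun n m => Rmult_comm n m)) as H2.
      simpl in H2. unfold mult, plus in H2; simpl in H2.
      replace (rho' th * cos (th - x) - rho th * sin (th - x)) with (rho' th * cos (th - x) + rho th * - sin (th - x)) by ring.
      exact H2.
    - intros; apply Hdc. }
  rewrite <- (is_RInt_unique _ _ _ _ HI).
  eapply Rle_trans. apply abs_RInt_le. exact Hab. eexists; exact HI.
  apply RInt_le. exact Hab.
  apply exRI. intros; apply continuous_Rabs_comp, Hdc.
  apply g_int.
  intros th _. unfold g, dphi. rewrite <- sqrt_Rsqr_abs. apply sqrt_le_1_alt.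
  assert (Hcs := sin2_cos2 (th - x)). unfold Rsqr in *.
  set (c := cos (th - x)) in *. set (s := sin (th - x)) in *.
  set (u := rho th). set (v := rho' th).
  assert (E : (u*u+v*v)*(s*s+c*c) - (v*c-u*s)*(v*c-u*s) = (v*s+u*c)*(v*s+u*c)) by ring.
  rewrite Hcs in E. simpl. pose proof (Rle_0_sqr (v*s+u*c)). unfold Rsqr in *. lra.
Qed.

Hypothesis Hper : forall th, rho (th + 2 * PI) = rho th.
Hypothesis Hpos : forall th, 0 < rho th.

Lemma len_bound x : 2 * rho x <= RInt g 0 (2 * PI).
Proof.
  assert (HP := PI_RGT_0).
  destruct (periodic_reduce rho (2 * PI) ltac:(lra) Hper x) as [y [Hy Hxy]].
  rewrite Hxy. clear x Hxy.
  assert (Hphi0 : rho (2 * PI) * cos (2 * PI - y) = rho 0 * cos (0 - y)).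
  { replace (2 * PI) with (0 + 2 * PI) at 1 by ring. rewrite Hper.
    f_equal. replace (2 * PI - y) with ((0 - y) + 2 * INR 1 * PI) by (simpl; ring).
    rewrite cos_period. reflexivity. }
  assert (Hphiy : rho y * cos (y - y) = rho y).
  { rewrite Rminus_eq_0, cos_0. ring. }
  assert (Hch : forall a b c, RInt g a c = RInt g a b + RInt g b c).
  { intros. symmetry. apply (RInt_Chasles g); apply g_int. }
  set (p0 := rho 0 * cos (0 - y)) in *.
  destruct (Rle_lt_dec y PI) as [Hy1|Hy1].
  - assert (Hphi1 : rho (y + PI) * cos (y + PI - y) = - rho (y + PI)).
    { replace (y + PI - y) with PI by ring. rewrite cos_PI. ring. }
    rewrite (Hch 0 y), (Hch y (y + PI)).
    assert (A1 := arc_bound y 0 y ltac:(lra)).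
    assert (A2 := arc_bound y y (y + PI) ltac:(lra)).
    assert (A3 := arc_bound y (y + PI) (2 * PI) ltac:(lra)).
    rewrite Hphi0, Hphiy, Hphi1 in *. fold p0 in A1.
    assert (Hp1 := Hpos (y + PI)). assert (Hp2 := Hpos y).
    apply Rabs_le_between in A1. apply Rabs_le_between in A2. apply Rabs_le_between in A3.
    lra.
  - assert (Hphi1 : rho (y - PI) * cos (y - PI - y) = - rho (y - PI)).
    { replace (y - PI - y) with (- PI) by ring. rewrite cos_neg, cos_PI. ring. }
    rewrite (Hch 0 (y - PI)), (Hch (y - PI) y (2 * PI)).
    assert (A1 := arc_bound y 0 (y - PI) ltac:(lra)).
    assert (A2 := arc_bound y (y - PI) y ltac:(lra)).
    assert (A3 := arc_bound y y (2 * PI) ltac:(lra)).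
    rewrite Hphi0, Hphiy, Hphi1 in *. fold p0 in A1.
    assert (Hp1 := Hpos (y - PI)). assert (Hp2 := Hpos y).
    apply Rabs_le_between in A1. apply Rabs_le_between in A2. apply Rabs_le_between in A3.
    lra.
Qed.
End Geo.


Lemma Derive_periodic (f : R -> R) T x : (forall y, f (y + T) = f y) ->
  ex_derive f (x + T) -> Derive f (x + T) = Derive f x.
Proof.
  intros Hp He.
  rewrite <- (Derive_ext (fun y => f (y + T)) f x Hp).
  rewrite (Derive_comp f (fun y => y + T) x He).
  - replace (Derive (fun y => y + T) x) with 1. ring.
    symmetry. apply is_derive_unique. auto_derive; auto; ring.
  - auto_derive; auto.
Qed.

Lemma ball_abs (x y e : R) : ball x e y <-> Rabs (y - x) < e.
Proof. split; intros H; exact H. Qed.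

Lemma key_ineq (r q a g wp p : R) : 0 < r -> 0 < g -> p ^ 2 = g ^ 2 - r ^ 2 ->
  (r * (/ (g ^ 2) * q - 2 / (r * g ^ 2) * p ^ 2 - r / g ^ 2 + a * g / r) + p * wp) / g <=
  - a + a ^ 2 * g + (((q * g - p * (r * p + p * q) / g) / g ^ 2) * (/ (g ^ 2) * q - 2 / (r * g ^ 2) * p ^ 2 - r / g ^ 2 + a * g / r)
     + (p / g) * wp + a * (q * r - p * p) / (r * r + p * p)).
Proof.
  intros Hr Hg Hp.
  replace (p * (r * p + p * q)) with (p ^ 2 * (r + q)) by ring.
  replace (p * p) with (p ^ 2) by ring.
  rewrite Hp.
  set (k := (2 * g ^ 2 - r ^ 2 - r * q) / g ^ 3).
  match goal with |- ?L <= ?R => assert (E : R - L = g * (k - a) ^ 2) end.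
  { unfold k. field. split; [lra|split; [lra|]]. replace (r * r + (g ^ 2 - r ^ 2)) with (g * g) by ring. apply Rgt_not_eq, Rmult_lt_0_compat; lra. }
  assert (0 <= g * (k - a) ^ 2) by (apply Rmult_le_pos; [lra | apply pow2_ge_0]).
  lra.
Qed.

Lemma RInt_lin (f h : R -> R) c k a b : ex_RInt f a b -> ex_RInt h a b ->
  RInt (fun x => c + k * f x + h x) a b = c * (b - a) + k * RInt f a b + RInt h a b.
Proof.
  intros [If Hf] [Ih Hh]. apply is_RInt_unique.
  rewrite (is_RInt_unique _ _ _ _ Hf), (is_RInt_unique _ _ _ _ Hh).
  apply (is_RInt_plus (fun x => c + k * f x) h).
  apply (is_RInt_plus (fun _ => c) (fun x => k * f x)).
  replace (c * (b - a)) with (scal (b - a) c) by (unfold scal; simpl; unfold mult; simpl; ring).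
  apply (is_RInt_const (V := R_NormedModule)).
  apply (is_RInt_scal f). exact Hf. exact Hh.
Qed.

Definition GDz R P S g L := S / g ^ 2 + 2 * P ^ 3 * (g ^ 2 + 2 * R ^ 2) / (R ^ 2 * g ^ 4)
  + P * (2 * R ^ 2 - g ^ 2) / g ^ 4 + (2 * PI / L) * (R * P / g * R - g * P) / R ^ 2.

Lemma grad_alg R P S g L L0 : 0 < R -> 0 < g -> g ^ 2 = R ^ 2 + P ^ 2 -> 0 < L -> L <= L0 ->
  2 * R <= L -> (3 * L0 / PI) ^ 2 < P ^ 2 -> P * S <= 0 -> 0 <= P * GDz R P S g L -> False.
Proof.
  intros HR Hg Hg2 HL HLL0 HRL HP HPS HG.
  assert (HPI := PI_RGT_0). assert (HPI4 := PI_4).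
  assert (HL0 : 0 < L0) by lra.
  set (x := 3 * L0 / PI) in *.
  assert (Hx : 0 < x) by (unfold x; apply Rdiv_lt_0_compat; lra).
  assert (Hxg : x < g).
  { apply Rnot_le_lt. intros Hle. assert (g ^ 2 <= x ^ 2) by (apply pow_incr; lra). nra. }
  assert (HLg : 6 * L < 2 * PI * g).
  { assert (L0 = x * PI / 3) by (unfold x; field; lra). nra. }
  assert (HP2 : 0 < P ^ 2) by nra.
  assert (HRP : R ^ 2 <= P ^ 2).
  { assert (R <= L0 / 2) by lra.
    assert (L0 / 2 < x). { unfold x. apply Rmult_lt_reg_r with PI; [lra|].
      replace (3 * L0 / PI * PI) with (3 * L0) by (field; lra). nra. }
    assert (R < x) by lra. assert (R ^ 2 < x ^ 2) by nra. lra. }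
  assert (E : P * GDz R P S g L = P * S / g ^ 2 +
     (P ^ 2 / (R ^ 2 * g ^ 4)) * (2 * P ^ 2 * (g ^ 2 + 2 * R ^ 2) + R ^ 2 * (2 * R ^ 2 - g ^ 2)
        + (2 * PI / L) * g ^ 3 * (R ^ 2 - g ^ 2))).
  { unfold GDz. field. lra. }
  rewrite E in HG. clear E.
  replace (g ^ 2 + 2 * R ^ 2) with (3 * R ^ 2 + P ^ 2) in HG by lra.
  replace (2 * R ^ 2 - g ^ 2) with (R ^ 2 - P ^ 2) in HG by lra.
  replace (R ^ 2 - g ^ 2) with (- P ^ 2) in HG by lra.
  assert (H1 : P * S / g ^ 2 <= 0).
  { unfold Rdiv. apply Rmult_le_0_r. lra. apply Rlt_le, Rinv_0_lt_compat, pow_lt; lra. }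
  assert (H2 : 0 < P ^ 2 / (R ^ 2 * g ^ 4)).
  { apply Rdiv_lt_0_compat. lra. apply Rmult_lt_0_compat; apply pow_lt; lra. }
  assert (H3 : 2 * P ^ 2 * (3 * R ^ 2 + P ^ 2) + R ^ 2 * (R ^ 2 - P ^ 2) + 2 * PI / L * g ^ 3 * - P ^ 2 < 0).
  { assert (Ha : 6 / g < 2 * PI / L).
    { apply Rmult_lt_reg_r with (g * L). nra. field_simplify; try lra. }
    assert (Hb : 6 / g * g ^ 3 * P ^ 2 < 2 * PI / L * g ^ 3 * P ^ 2).
    { apply (Rmult_lt_compat_r (P ^ 2) (6 / g * g ^ 3) (2 * PI / L * g ^ 3)). lra.
      apply (Rmult_lt_compat_r (g ^ 3) (6 / g) (2 * PI / L)). apply pow_lt; lra. exact Ha. }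
    replace (6 / g * g ^ 3 * P ^ 2) with (6 * g ^ 2 * P ^ 2) in Hb by (field; lra).
    rewrite Hg2 in Hb.
    assert (R ^ 2 * R ^ 2 <= R ^ 2 * P ^ 2) by (apply Rmult_le_compat_l; [apply pow2_ge_0|lra]).
    nra. }
  assert (P ^ 2 / (R ^ 2 * g ^ 4) * (2 * P ^ 2 * (3 * R ^ 2 + P ^ 2) + R ^ 2 * (R ^ 2 - P ^ 2) + 2 * PI / L * g ^ 3 * - P ^ 2) < 0).
  { set (A := P ^ 2 / (R ^ 2 * g ^ 4)) in *.
    set (B := 2 * P ^ 2 * (3 * R ^ 2 + P ^ 2) + R ^ 2 * (R ^ 2 - P ^ 2) + 2 * PI / L * g ^ 3 * - P ^ 2) in *.
    assert (0 < A * - B) by (apply Rmult_lt_0_compat; lra).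
    replace (A * - B) with (- (A * B)) in H by ring. lra. }
  lra.
Qed.

Lemma left_max (k : R -> R) x l e : is_derive k x l -> 0 < e ->
  (forall y, x - e < y < x -> k y <= k x) -> 0 <= l.
Proof.
  intros Hd He Hk. apply is_derive_Reals in Hd.
  apply Rnot_lt_le. intros Hl.
  destruct (Hd (- l / 2) ltac:(lra)) as [d Hd'].
  set (h := - Rmin (d / 2) (e / 2)).
  assert (Hm1 : Rmin (d / 2) (e / 2) <= d / 2) by apply Rmin_l.
  assert (Hm2 : Rmin (d / 2) (e / 2) <= e / 2) by apply Rmin_r.
  assert (Hm0 : 0 < Rmin (d / 2) (e / 2)) by (apply Rmin_pos; [destruct d; simpl; lra | lra]).
  assert (Hdp := cond_pos d).
  specialize (Hd' h ltac:(unfold h; lra)).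
  assert (Hh : Rabs h < d) by (unfold h; rewrite Rabs_Ropp, Rabs_pos_eq; lra).
  specialize (Hd' Hh).
  assert (Hky := Hk (x + h) ltac:(unfold h; lra)).
  apply Rabs_lt_between in Hd'.
  assert (Hq : (k (x + h) - k x) / h >= 0).
  { unfold Rdiv. replace ((k (x + h) - k x) * / h) with ((k x - k (x + h)) * / (- h)) by (field; unfold h; lra).
    apply Rle_ge, Rmult_le_pos; [lra|]. apply Rlt_le, Rinv_0_lt_compat. unfold h; lra. }
  lra.
Qed.

Lemma right_max (k : R -> R) x l e : is_derive k x l -> 0 < e ->
  (forall y, x < y < x + e -> k y <= k x) -> l <= 0.
Proof.
  intros Hd He Hk.
  assert (Hd2 : is_derive (fun y => k (- y)) (- x) (- l)).
  { evar (ll : R). replace (- l) with ll. apply (is_derive_comp k (fun y => - y)).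
    rewrite Ropp_involutive. exact Hd. auto_derive; auto. unfold ll. simpl. unfold scal; simpl; unfold mult; simpl. ring. }
  assert (H := left_max (fun y => k (- y)) (- x) (- l) e Hd2 He).
  cut (0 <= - l). lra. apply H. intros y Hy. rewrite Ropp_involutive. apply Hk. lra.
Qed.

Lemma max_deriv0 (h : R -> R) x l : is_derive h x l -> (forall y, h y <= h x) -> l = 0.
Proof.
  intros Hd Hm. apply Rle_antisym.
  - apply (right_max h x l 1 Hd ltac:(lra)). intros; apply Hm.
  - apply (left_max h x l 1 Hd ltac:(lra)). intros; apply Hm.
Qed.

Lemma max_deriv2 (h h' : R -> R) x l : (forall y, is_derive h y (h' y)) -> is_derive h' x l ->
  (forall y, h y <= h x) -> l <= 0.
Proof.
  intros Hd Hd2 Hm.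
  assert (H0 : h' x = 0) by (apply (max_deriv0 h x); auto).
  apply Rnot_lt_le. intros Hl.
  assert (Hd2' := Hd2). apply is_derive_Reals in Hd2'.
  destruct (Hd2' (l / 2) ltac:(lra)) as [d Hd'].
  set (e := d / 2). assert (He : 0 < e) by (unfold e; destruct d; simpl; lra).
  assert (Hpos : forall z, 0 < z < e -> 0 < h' (x + z)).
  { intros z Hz. specialize (Hd' z ltac:(lra)).
    assert (Rabs z < d) by (rewrite Rabs_pos_eq by lra; unfold e in Hz; lra).
    specialize (Hd' H). rewrite H0, Rminus_0_r in Hd'. apply Rabs_lt_between in Hd'.
    assert (h' (x + z) / z > 0) by lra.
    replace (h' (x + z)) with ((h' (x + z) / z) * z) by (field; lra).
    apply Rmult_lt_0_compat; lra. }
  assert (Hcont : forall y, continuity_pt h y).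
  { intros y. apply continuity_pt_filterlim.
    exact (ex_derive_continuous (K := R_AbsRing) h y (ex_intro _ _ (Hd y))). }
  destruct (MVT_gen h x (x + e / 4) h') as [c1 [Hc1 E1]].
  { intros; apply Hd. } { intros; apply Hcont. }
  destruct (MVT_gen h (x + e / 4) (x + e / 2) h') as [c2 [Hc2 E2]].
  { intros; apply Hd. } { intros; apply Hcont. }
  rewrite Rmin_left, Rmax_right in Hc1, Hc2 by lra.
  assert (P1 : 0 <= h' c1).
  { destruct (Req_dec c1 x) as [->|Hne]. lra.
    replace c1 with (x + (c1 - x)) by ring. apply Rlt_le, Hpos. lra. }
  assert (P2 : 0 < h' c2).
  { replace c2 with (x + (c2 - x)) by ring. apply Hpos. lra. }
  assert (h (x + e / 4) - h x >= 0). { rewrite E1. apply Rle_ge, Rmult_le_pos; lra. }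
  assert (h (x + e / 2) - h (x + e / 4) > 0). { rewrite E2. apply Rmult_lt_0_compat; lra. }
  specialize (Hm (x + e / 2)). lra.
Qed.

Section Main.
Variables (r : R -> R -> R) (omega : Rbar) (delta : R).
Hypothesis Hdel : 0 < delta.
Hypothesis Hsm : smooth_on (fun _ t => - delta < t /\ Rbar_lt (Finite t) omega) r.
Hypothesis Hper : forall th t, 0 <= t -> Rbar_lt (Finite t) omega -> r (th + 2 * PI) t = r th t.
Hypothesis Hpos : forall th t, 0 <= t -> Rbar_lt (Finite t) omega -> 0 < r th t.

Definition UU t := - delta < t /\ Rbar_lt (Finite t) omega.

Lemma UU_loc t : UU t -> exists e, 0 < e /\ forall s, Rabs (s - t) < e -> UU s.
Proof.
  intros [H1 H2]. unfold UU.
  destruct omega as [w| |]; simpl in *.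
  - exists (Rmin (t + delta) (w - t)). split. apply Rmin_pos; lra.
    intros s Hs. apply Rabs_lt_between' in Hs.
    assert (Rmin (t + delta) (w - t) <= t + delta) by apply Rmin_l.
    assert (Rmin (t + delta) (w - t) <= w - t) by apply Rmin_r. lra.
  - exists (t + delta). split. lra. intros s Hs. apply Rabs_lt_between' in Hs. lra.
  - contradiction.
Qed.

Lemma UU_locally t : UU t -> locally t UU.
Proof.
  intros H. destruct (UU_loc t H) as [e [He H']]. exists (mkposreal e He). intros y Hy. apply H'. exact Hy.
Qed.

Lemma UU_loc2 th t : UU t -> locally_2d (fun _ v => UU v) th t.
Proof.
  intros H. destruct (UU_loc t H) as [e [He H']]. exists (mkposreal e He). intros u v _ Hv. apply H'. exact Hv.
Qed.

Lemma exth w th t : UU t -> ex_derive (fun x => iterD w r x t) th.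
Proof. intros H. exact (proj1 (Hsm w th t H)). Qed.
Lemma ext w th t : UU t -> ex_derive (fun s => iterD w r th s) t.
Proof. intros H. exact (proj1 (proj2 (Hsm w th t H))). Qed.
Lemma c2 w th t : UU t -> continuity_2d_pt (iterD w r) th t.
Proof. intros H. apply continuity_2d_pt_filterlim. exact (proj2 (proj2 (Hsm w th t H))). Qed.

Lemma DD_UU t : 0 <= t -> Rbar_lt (Finite t) omega -> UU t.
Proof. intros; split; auto; lra. Qed.

Lemma per_Dth th t : 0 <= t -> Rbar_lt (Finite t) omega -> Dth r (th + 2 * PI) t = Dth r th t.
Proof.
  intros H1 H2. unfold Dth. apply Derive_periodic.
  intros; now apply Hper. apply (exth nil). now apply DD_UU.
Qed.

Lemma per_Dth2 th t : 0 <= t -> Rbar_lt (Finite t) omega -> Dth (Dth r) (th + 2 * PI) t = Dth (Dth r) th t.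
Proof.
  intros H1 H2. unfold Dth at 1. apply Derive_periodic.
  intros; now apply per_Dth. apply (exth (false :: nil)). now apply DD_UU.
Qed.

Lemma schwarz th t : UU t -> Dt (Dth r) th t = Dth (Dt r) th t.
Proof.
  intros H. unfold Dt, Dth. symmetry.
  apply (Schwarz r th t).
  - apply locally_2d_impl with (2 := UU_loc2 th t H). apply locally_2d_forall.
    intros u v Hv. split; [apply (exth nil); auto|]. split; [apply (ext nil); auto|].
    split; [apply (exth (true :: nil)); auto| apply (ext (false :: nil)); auto].
  - apply (c2 (false :: true :: nil)); auto.
  - apply (c2 (true :: false :: nil)); auto.
Qed.


Lemma pos_loc2 (f : R -> R -> R) x y : continuity_2d_pt f x y -> 0 < f x y -> locally_2d (fun u v => 0 < f u v) x y.
Proof.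
  intros H Hp. destruct (H (mkposreal _ Hp)) as [d Hd]. exists d. intros u v Hu Hv.
  specialize (Hd u v Hu Hv). simpl in Hd. apply Rabs_lt_between in Hd. lra.
Qed.

Lemma tube t : 0 <= t -> Rbar_lt (Finite t) omega -> exists e, 0 < e /\
  forall s, Rabs (s - t) < e -> UU s /\ forall th, 0 <= th <= 2 * PI -> 0 < r th s.
Proof.
  intros H1 H2. destruct (UU_loc t (DD_UU t H1 H2)) as [e0 [He0 HU]].
  destruct (Classical_Prop.classic (exists e, 0 < e /\ forall s, Rabs (s - t) < e ->
     forall th, 0 <= th <= 2 * PI -> 0 < r th s)) as [[e [He H]]|Hn].
  - exists (Rmin e e0). split. now apply Rmin_pos.
    intros s Hs. split. apply HU. eapply Rlt_le_trans; [exact Hs| apply Rmin_r].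
    apply H. eapply Rlt_le_trans; [exact Hs| apply Rmin_l].
  - exfalso.
    assert (Hw : forall eps, 0 < eps -> exists th s, 0 <= th <= 2 * PI /\ Rabs (s - t) < eps /\ 0 <= - r th s).
    { intros eps Heps. apply Classical_Prop.NNPP. intros Hc. apply Hn.
      exists (Rmin eps e0). split. now apply Rmin_pos.
      intros s Hs th Hth. apply Rnot_le_lt. intros Hle. apply Hc. exists th, s.
      split; [exact Hth|]. split; [|lra]. eapply Rlt_le_trans; [exact Hs| apply Rmin_l]. }
    assert (HP := PI_RGT_0).
    destruct (closed_max (fun th s => - r th s) 0 (2 * PI) t 0 ltac:(lra)) as [th [Hth Hr]].
    + intros th Hth. apply continuity_2d_pt_opp. apply (c2 nil). now apply DD_UU.
    + exact Hw.
    + specialize (Hpos th t H1 H2). lra.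
Qed.

Definition gtf th s := (r th s * Dt r th s + Dth r th s * Dt (Dth r) th s) / gfun r th s.

Lemma gfun_pos th s : 0 < r th s -> 0 < gfun r th s.
Proof. intros H. unfold gfun. apply sqrt_lt_R0. nra. Qed.

Lemma gfun_sq th s : gfun r th s ^ 2 = r th s ^ 2 + Dth r th s ^ 2.
Proof. unfold gfun. apply pow2_sqrt. nra. Qed.

Lemma gt_deriv th s : UU s -> 0 < r th s -> is_derive (fun z => gfun r th z) s (gtf th s).
Proof.
  intros HU Hr. assert (Hg := gfun_pos th s Hr). unfold gtf. unfold gfun in *. auto_derive.
  - split; [exact (ext nil th s HU)|split; [exact (ext (false::nil) th s HU)| split; [nra|exact I]]].
  - change (Derive (fun x => r th x) s) with (Dt r th s).
    change (Derive (fun x => Dth r th x) s) with (Dt (Dth r) th s).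
    replace (r th s * (r th s * 1) + Dth r th s * (Dth r th s * 1)) with (r th s ^ 2 + Dth r th s ^ 2) by ring.
    field. lra.
Qed.

Lemma c2_g th s : UU s -> continuity_2d_pt (gfun r) th s.
Proof.
  intros HU. apply continuity_2d_pt_ext with (fun u v => sqrt (r u v * r u v + Dth r u v * Dth r u v)).
  intros; unfold gfun; f_equal; ring.
  apply c2d_sqrt. apply continuity_2d_pt_plus; apply continuity_2d_pt_mult;
  try apply (c2 nil); try apply (c2 (false :: nil)); auto.
Qed.

Lemma c2_gt th s : UU s -> 0 < r th s -> continuity_2d_pt gtf th s.
Proof.
  intros HU Hr. unfold gtf. unfold Rdiv.
  apply continuity_2d_pt_mult.
  - apply continuity_2d_pt_plus; apply continuity_2d_pt_mult;
    try apply (c2 nil); try apply (c2 (false :: nil)); try apply (c2 (true :: nil));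
    try apply (c2 (true :: false :: nil)); auto.
  - apply continuity_2d_pt_inv. now apply c2_g. apply Rgt_not_eq, gfun_pos; auto.
Qed.

Lemma cont_of_c2 (f : R -> R -> R) th s : continuity_2d_pt f th s -> continuous (fun x => f x s) th.
Proof. intros H. apply continuity_pt_filterlim. now apply c2d_1. Qed.

Lemma L_deriv t : 0 <= t -> Rbar_lt (Finite t) omega ->
  is_derive (Lfun r) t (RInt (fun th => gtf th t) 0 (2 * PI)).
Proof.
  intros H1 H2. assert (HP := PI_RGT_0).
  destruct (tube t H1 H2) as [e [He Ht]].
  assert (Hmin : Rmin 0 (2 * PI) = 0) by (apply Rmin_left; lra).
  assert (Hmax : Rmax 0 (2 * PI) = 2 * PI) by (apply Rmax_right; lra).
  unfold Lfun.
  assert (HD := is_derive_RInt_param (fun u th => gfun r th u) 0 (2 * PI) t).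
  simpl in HD.
  replace (RInt (fun th => gtf th t) 0 (2 * PI)) with (RInt (fun th => Derive (fun u => gfun r th u) t) 0 (2 * PI)).
  apply HD.
  - exists (mkposreal e He). intros y Hy th Hth. rewrite Hmin, Hmax in Hth.
    destruct (Ht y Hy) as [HU Hr]. eexists. apply gt_deriv; auto.
  - intros th Hth. rewrite Hmin, Hmax in Hth.
    apply (c2d_swap (fun v u => Derive (fun z => gfun r v z) u)).
    apply continuity_2d_pt_ext_loc with gtf.
    + assert (HU := DD_UU t H1 H2).
      apply locally_2d_impl with (2 := locally_2d_and _ _ _ _ (UU_loc2 th t HU) (pos_loc2 r th t (c2 nil th t HU) (Hpos th t H1 H2))).
      apply locally_2d_forall. intros u v [Hu Hv]. symmetry. apply is_derive_unique. apply gt_deriv; auto.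
    + apply c2_gt. now apply DD_UU. now apply Hpos.
  - exists (mkposreal e He). intros y Hy. destruct (Ht y Hy) as [HU Hr].
    apply exRI. intros z _. apply cont_of_c2, c2_g; auto.
  - apply RInt_ext. intros th Hth. rewrite Hmin, Hmax in Hth.
    apply is_derive_unique. apply gt_deriv. now apply DD_UU. now apply Hpos.
Qed.


Hypothesis Heq : forall th t, 0 <= t -> Rbar_lt (Finite t) omega -> Dt r th t = gage_rhs r th t.

Definition Ff a t th := Dth r th t / gfun r th t * Dt r th t + a * atan (Dth r th t / r th t).
Definition DF a t th :=
  ((Dth (Dth r) th t * gfun r th t - Dth r th t * (r th t * Dth r th t + Dth r th t * Dth (Dth r) th t) / gfun r th t) / gfun r th t ^ 2) * Dt r th t
  + (Dth r th t / gfun r th t) * Dth (Dt r) th t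
  + a * (Dth (Dth r) th t * r th t - Dth r th t * Dth r th t) / (r th t * r th t + Dth r th t * Dth r th t).

Ltac solve_side HU th t :=
  repeat match goal with |- _ /\ _ => split end;
  match goal with
  | |- True => exact I
  | |- ex_derive (fun x => r x t) th => exact (exth nil th t HU)
  | |- ex_derive (fun x => Dth r x t) th => exact (exth (false :: nil) th t HU)
  | |- ex_derive (fun x => Dth (Dth r) x t) th => exact (exth (false :: false :: nil) th t HU)
  | |- ex_derive (fun x => Dt r x t) th => exact (exth (true :: nil) th t HU)
  | _ => idtac
  end.

Lemma F_deriv a t th : UU t -> 0 < r th t -> is_derive (Ff a t) th (DF a t th).
Proof.
  intros HU Hr. assert (Hg := gfun_pos th t Hr). unfold Ff, DF. unfold gfun in *. auto_derive.
  - solve_side HU th t.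
    + nra.
    + replace (r th t * (r th t * 1) + Dth r th t * (Dth r th t * 1)) with (r th t ^ 2 + Dth r th t ^ 2) by ring. lra.
    + lra.
  - change (Derive (fun x => r x t) th) with (Dth r th t).
    change (Derive (fun x => Dth r x t) th) with (Dth (Dth r) th t).
    change (Derive (fun x => Dt r x t) th) with (Dth (Dt r) th t).
    replace (r th t * (r th t * 1) + Dth r th t * (Dth r th t * 1)) with (r th t ^ 2 + Dth r th t ^ 2) by ring.
    set (g := sqrt (r th t ^ 2 + Dth r th t ^ 2)) in *.
    assert (Hg2 : g ^ 2 = r th t ^ 2 + Dth r th t ^ 2) by (unfold g; apply pow2_sqrt; nra).
    set (R0 := r th t) in *. set (P := Dth r th t) in *.
    field. split; [nra|]. split; lra.
Qed.

Lemma c2_pow2 (f : R -> R -> R) x y : continuity_2d_pt f x y -> continuity_2d_pt (fun u v => f u v ^ 2) x y.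
Proof.
  intros H. apply continuity_2d_pt_ext with (fun u v => f u v * f u v). intros; ring.
  now apply continuity_2d_pt_mult.
Qed.

Lemma c2_DF a t th : UU t -> 0 < r th t -> continuity_2d_pt (fun u v => DF a v u) th t.
Proof.
  intros HU Hr. assert (Hg := gfun_pos th t Hr). unfold DF, Rdiv.
  repeat first [ apply continuity_2d_pt_plus | apply continuity_2d_pt_minus | apply continuity_2d_pt_mult | apply continuity_2d_pt_opp
    | apply continuity_2d_pt_const | apply c2_pow2
    | exact (c2 nil th t HU) | exact (c2 (false :: nil) th t HU) | exact (c2 (false :: false :: nil) th t HU)
    | exact (c2 (true :: nil) th t HU) | exact (c2 (false :: true :: nil) th t HU) | exact (c2_g th t HU)
    | apply continuity_2d_pt_inv ].
  all: try (apply Rgt_not_eq; lra).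
  all: try (apply Rgt_not_eq; apply pow_lt; lra).
  apply Rgt_not_eq. nra.
Qed.

Lemma Lpos t : 0 <= t -> Rbar_lt (Finite t) omega -> 2 * r 0 t <= Lfun r t.
Proof.
  intros H1 H2. assert (HU := DD_UU t H1 H2).
  apply (len_bound (fun th => r th t) (fun th => Dth r th t)).
  - intros th. apply Derive_correct. exact (exth nil th t HU).
  - intros th. apply cont_of_c2. exact (c2 (false :: nil) th t HU).
  - intros th. now apply Hper.
  - intros th. now apply Hpos.
Qed.

Lemma r_le_L th t : 0 <= t -> Rbar_lt (Finite t) omega -> 2 * r th t <= Lfun r t.
Proof.
  intros H1 H2. assert (HU := DD_UU t H1 H2).
  apply (len_bound (fun th => r th t) (fun th => Dth r th t)).
  - intros x. apply Derive_correct. exact (exth nil x t HU).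
  - intros x. apply cont_of_c2. exact (c2 (false :: nil) x t HU).
  - intros x. now apply Hper.
  - intros x. now apply Hpos.
Qed.

Lemma pt_ineq t th : 0 <= t -> Rbar_lt (Finite t) omega ->
  gtf th t <= - (2 * PI / Lfun r t) + (2 * PI / Lfun r t) ^ 2 * gfun r th t + DF (2 * PI / Lfun r t) t th.
Proof.
  intros H1 H2. assert (HU := DD_UU t H1 H2).
  assert (HL := r_le_L 0 t H1 H2). assert (Hr0 := Hpos 0 t H1 H2).
  assert (Hr := Hpos th t H1 H2). assert (Hg := gfun_pos th t Hr).
  unfold gtf, DF. rewrite (schwarz th t HU), (Heq th t H1 H2). unfold gage_rhs. cbv zeta.
  replace (2 * PI * gfun r th t / (r th t * Lfun r t)) with ((2 * PI / Lfun r t) * gfun r th t / r th t)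
    by (field; lra).
  apply key_ineq; auto. rewrite gfun_sq. ring.
Qed.

Lemma Ff_per a t : 0 <= t -> Rbar_lt (Finite t) omega -> Ff a t (2 * PI) = Ff a t 0.
Proof.
  intros H1 H2. unfold Ff.
  replace (2 * PI) with (0 + 2 * PI) by ring.
  rewrite (Heq (0 + 2 * PI) t H1 H2), (Heq 0 t H1 H2). unfold gage_rhs, gfun.
  rewrite (Hper 0 t H1 H2), (per_Dth 0 t H1 H2), (per_Dth2 0 t H1 H2). reflexivity.
Qed.

Lemma L_sign t : 0 <= t -> Rbar_lt (Finite t) omega -> RInt (fun th => gtf th t) 0 (2 * PI) <= 0.
Proof.
  intros H1 H2. assert (HU := DD_UU t H1 H2). assert (HP := PI_RGT_0).
  assert (HL := r_le_L 0 t H1 H2). assert (Hr0 := Hpos 0 t H1 H2).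
  assert (Hgi : ex_RInt (fun th => gfun r th t) 0 (2 * PI)).
  { apply exRI. intros z _. apply cont_of_c2, c2_g; auto. }
  assert (HDc : forall z, continuous (DF (2 * PI / Lfun r t) t) z).
  { intros z. apply (cont_of_c2 (fun u v => DF (2 * PI / Lfun r t) v u)). apply c2_DF; auto. }
  assert (HDi : ex_RInt (DF (2 * PI / Lfun r t) t) 0 (2 * PI)).
  { apply exRI. intros z _. apply HDc. }
  eapply Rle_trans.
  apply RInt_le with (g := fun th => - (2 * PI / Lfun r t) + (2 * PI / Lfun r t) ^ 2 * gfun r th t + DF (2 * PI / Lfun r t) t th).
  - lra.
  - apply exRI. intros z _. apply cont_of_c2, c2_gt; auto.
  - apply exRI. intros z _. apply cont_plus; [apply cont_plus|].
    apply cont_const. apply cont_mult. apply cont_const. apply cont_of_c2, c2_g; auto.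
    apply HDc.
  - intros th _. now apply pt_ineq.
  - rewrite RInt_lin by assumption.
    assert (HI := is_RInt_derive (Ff (2 * PI / Lfun r t) t) (DF (2 * PI / Lfun r t) t) 0 (2 * PI)).
    rewrite (is_RInt_unique _ _ _ _ (HI (fun x _ => F_deriv _ t x HU (Hpos x t H1 H2)) (fun x _ => HDc x))).
    rewrite Ff_per by auto. unfold minus, plus, opp; simpl.
    unfold Lfun in *.
    set (L := RInt (fun th => gfun r th t) 0 (2 * PI)) in *.
    right. field. lra.
Qed.

Lemma L_decr t : 0 <= t -> Rbar_lt (Finite t) omega -> Lfun r t <= Lfun r 0.
Proof.
  intros H1 H2.
  destruct (Req_dec t 0) as [->|Ht0]; [lra|].
  assert (Hlt : forall s, 0 <= s <= t -> Rbar_lt (Finite s) omega).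
  { intros s Hs. destruct omega; simpl in *; auto; lra. }
  destruct (MVT_gen (Lfun r) 0 t (fun s => RInt (fun th => gtf th s) 0 (2 * PI))) as [c [Hc Heqc]].
  - intros x Hx. rewrite Rmin_left, Rmax_right in Hx by lra.
    apply L_deriv; [lra| apply Hlt; lra].
  - intros x Hx. rewrite Rmin_left, Rmax_right in Hx by lra.
    apply continuity_pt_filterlim.
    exact (ex_derive_continuous (K := R_AbsRing) (Lfun r) x (ex_intro _ _ (L_deriv x ltac:(lra) (Hlt x ltac:(lra))))).
  - rewrite Rmin_left, Rmax_right in Hc by lra.
    assert (Hs := L_sign c ltac:(lra) (Hlt c Hc)).
    assert (Lfun r t - Lfun r 0 <= 0). { rewrite Heqc. apply Rmult_le_0_r; lra. }
    lra.
Qed.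

Lemma G_deriv t th : 0 <= t -> Rbar_lt (Finite t) omega -> Dth (Dth r) th t = 0 ->
  is_derive (fun x => gage_rhs r x t) th
    (GDz (r th t) (Dth r th t) (Dth (Dth (Dth r)) th t) (gfun r th t) (Lfun r t)).
Proof.
  intros H1 H2 Hq. assert (HU := DD_UU t H1 H2).
  assert (HL := r_le_L 0 t H1 H2). assert (Hr0 := Hpos 0 t H1 H2).
  assert (Hr := Hpos th t H1 H2). assert (Hg := gfun_pos th t Hr).
  unfold gage_rhs. cbv zeta. unfold gfun in *.
  assert (Hs : 0 < sqrt (r th t * (r th t * 1) + Dth r th t * (Dth r th t * 1))) by (apply sqrt_lt_R0; nra).
  assert (HLp : 0 < Lfun r t) by lra.
  auto_derive.
  - solve_side HU th t.
    all: try nra.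
    all: try (replace (r th t * (r th t * 1) + Dth r th t * (Dth r th t * 1)) with (r th t ^ 2 + Dth r th t ^ 2) by ring; lra).
    all: try (apply Rgt_not_eq; repeat (apply Rmult_lt_0_compat || lra)).
  - change (Derive (fun x => r x t) th) with (Dth r th t).
    change (Derive (fun x => Dth r x t) th) with (Dth (Dth r) th t).
    change (Derive (fun x => Dth (Dth r) x t) th) with (Dth (Dth (Dth r)) th t).
    rewrite Hq.
    replace (r th t * (r th t * 1) + Dth r th t * (Dth r th t * 1)) with (r th t ^ 2 + Dth r th t ^ 2) by ring.
    set (g := sqrt (r th t ^ 2 + Dth r th t ^ 2)) in *.
    set (R0 := r th t) in *. set (P := Dth r th t) in *.
    unfold GDz. field. repeat split; lra.
Qed.

Lemma c2p2 th t : UU t -> continuity_2d_pt (fun u v => Dth r u v ^ 2) th t.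
Proof. intros HU. apply c2_pow2. exact (c2 (false :: nil) th t HU). Qed.

Lemma grad_main C : Rbar_lt (Finite 0) omega ->
  (forall th, 0 <= th <= 2 * PI -> Dth r th 0 ^ 2 < C ^ 2) ->
  3 * Lfun r 0 / PI < C ->
  forall t0, 0 <= t0 -> Rbar_lt (Finite t0) omega ->
  forall th0, 0 <= th0 <= 2 * PI -> Dth r th0 t0 ^ 2 < C ^ 2.
Proof.
  intros Hom H0 HC t0 Ht0 Hto th0 Hth0.
  assert (HP := PI_RGT_0).
  apply Rnot_le_lt. intros Hbad.
  assert (Hlt : forall s, 0 <= s <= t0 -> Rbar_lt (Finite s) omega).
  { intros s Hs. destruct omega; simpl in *; auto; lra. }
  set (Good := fun s => 0 <= s <= t0 /\ forall s', 0 <= s' <= s -> forall th, 0 <= th <= 2 * PI -> Dth r th s' ^ 2 < C ^ 2).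
  assert (G0 : Good 0).
  { split. lra. intros s' Hs' th Hth. replace s' with 0 by lra. now apply H0. }
  destruct (completeness Good) as [ts [Hub Hleast]].
  { exists t0. intros s [Hs _]. lra. }
  { exists 0. exact G0. }
  assert (Hts0 : 0 <= ts) by (apply Hub; exact G0).
  assert (Htst0 : ts <= t0) by (apply Hleast; intros s [Hs _]; lra).
  assert (Htso := Hlt ts ltac:(lra)). assert (HU := DD_UU ts Hts0 Htso).
  assert (Hbefore : forall s', 0 <= s' < ts -> forall th, 0 <= th <= 2 * PI -> Dth r th s' ^ 2 < C ^ 2).
  { intros s' Hs' th Hth.
    destruct (Classical_Prop.classic (exists s, Good s /\ s' <= s)) as [[s [[_ Gs] Hss]]|Hn].
    - apply Gs; auto. lra.
    - exfalso. assert (ts <= s'). { apply Hleast. intros s Gs. apply Rnot_lt_le. intros Hlt'.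
        apply Hn. exists s. split; auto; lra. } lra. }
  assert (Hat : forall th, 0 <= th <= 2 * PI -> Dth r th ts ^ 2 <= C ^ 2).
  { intros th Hth. destruct (Req_dec ts 0) as [Hz|Hz].
    - rewrite Hz. left. now apply H0.
    - apply Rnot_lt_le. intros Hgt.
      destruct (c2p2 th ts HU (mkposreal _ (Rlt_Rminus _ _ Hgt))) as [d Hd].
      set (s := ts - Rmin (d / 2) (ts / 2)).
      assert (Hm1 : Rmin (d / 2) (ts / 2) <= d / 2) by apply Rmin_l.
      assert (Hm2 : Rmin (d / 2) (ts / 2) <= ts / 2) by apply Rmin_r.
      assert (Hdp := cond_pos d).
      assert (Hm0 : 0 < Rmin (d / 2) (ts / 2)) by (apply Rmin_pos; lra).
      specialize (Hd th s). simpl in Hd.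
      rewrite Rminus_eq_0, Rabs_R0 in Hd.
      assert (Rabs (s - ts) < d) by (unfold s; rewrite Rabs_left by lra; lra).
      specialize (Hd Hdp H). apply Rabs_lt_between in Hd.
      assert (Dth r th s ^ 2 < C ^ 2) by (apply Hbefore; auto; unfold s; lra).
      lra. }
  assert (Hex : exists th, 0 <= th <= 2 * PI /\ C ^ 2 <= Dth r th ts ^ 2).
  { apply Classical_Prop.NNPP. intros Hn.
    assert (Hts_t0 : ts < t0).
    { destruct (Req_dec ts t0) as [E|E]; [|lra]. exfalso. apply Hn. exists th0. split; auto. rewrite E. lra. }
    destruct (UU_loc ts HU) as [e0 [He0 _]].
    assert (Hw : exists e, 0 < e /\ forall s, Rabs (s - ts) < e -> forall th, 0 <= th <= 2 * PI -> Dth r th s ^ 2 < C ^ 2).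
    { apply Classical_Prop.NNPP. intros Hn2. apply Hn.
      apply (closed_max (fun u v => Dth r u v ^ 2) 0 (2 * PI) ts (C ^ 2)). lra.
      intros th Hth. now apply c2p2.
      intros eps Heps. apply Classical_Prop.NNPP. intros Hc. apply Hn2. exists eps. split; auto.
      intros s Hs th Hth. apply Rnot_le_lt. intros Hle. apply Hc. exists th, s. auto. }
    destruct Hw as [e [He Hw]].
    set (s1 := Rmin (ts + e / 2) t0).
    assert (Hs1a : s1 <= ts + e / 2) by apply Rmin_l.
    assert (Hs1b : s1 <= t0) by apply Rmin_r.
    assert (Hs1c : ts < s1) by (apply Rmin_glb_lt; lra).
    assert (Good s1).
    { split. lra. intros s' Hs' th Hth. destruct (Rlt_le_dec s' ts).
      - apply Hbefore; auto; lra.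
      - apply Hw; auto. apply Rabs_lt_between'; lra. }
    assert (s1 <= ts) by (apply Hub; auto). lra. }
  destruct Hex as [ths [Hths HCs]].
  set (P := Dth r ths ts).
  assert (HP2 : P ^ 2 = C ^ 2) by (apply Rle_antisym; [apply Hat; exact Hths | exact HCs]).
  assert (Htspos : 0 < ts).
  { destruct (Req_dec ts 0) as [E|E]; [|lra]. rewrite E in HCs. specialize (H0 ths Hths). lra. }
  assert (HC0 : 0 < C).
  { assert (0 < Lfun r 0). { assert (H := r_le_L 0 0 ltac:(lra) Hom). assert (Hr := Hpos 0 0 ltac:(lra) Hom). lra. }
    assert (0 < 3 * Lfun r 0 / PI) by (apply Rdiv_lt_0_compat; lra). lra. }
  assert (HPne : P <> 0). { intros E. rewrite E in HP2. assert (0 < C ^ 2) by (apply pow_lt; lra). simpl in *. lra. }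
  assert (Hall : forall th, P * Dth r th ts <= P * P).
  { intros th.
    destruct (periodic_reduce (fun x => Dth r x ts) (2 * PI) ltac:(lra) (fun x => per_Dth x ts Hts0 Htso) th) as [y [Hy E]].
    simpl in E. rewrite E. assert (Hy2 := Hat y ltac:(lra)). rewrite <- HP2 in Hy2.
    set (v := Dth r y ts) in *. nra. }
  assert (Hder1 : forall th, is_derive (fun x => P * Dth r x ts) th (P * Dth (Dth r) th ts)).
  { intros th. apply (is_derive_scal (fun x => Dth r x ts)). apply Derive_correct. exact (exth (false :: nil) th ts HU). }
  assert (Hq : Dth (Dth r) ths ts = 0).
  { assert (P * Dth (Dth r) ths ts = 0).
    { apply (max_deriv0 (fun x => P * Dth r x ts) ths). apply Hder1. intros y. apply Hall. }
    apply Rmult_integral in H. destruct H; auto. contradiction. }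
  assert (HPS : P * Dth (Dth (Dth r)) ths ts <= 0).
  { apply (max_deriv2 (fun x => P * Dth r x ts) (fun x => P * Dth (Dth r) x ts) ths).
    - apply Hder1.
    - apply (is_derive_scal (fun x => Dth (Dth r) x ts)). apply Derive_correct. exact (exth (false :: false :: nil) ths ts HU).
    - intros y. apply Hall. }
  assert (Htime : 0 <= P * Dt (Dth r) ths ts).
  { apply (left_max (fun s => P * Dth r ths s) ts _ ts).
    - apply (is_derive_scal (fun s => Dth r ths s)). apply Derive_correct. exact (ext (false :: nil) ths ts HU).
    - exact Htspos.
    - intros y Hy. assert (Hy2 : Dth r ths y ^ 2 < C ^ 2) by (apply Hbefore; auto; lra).
      rewrite <- HP2 in Hy2. cbv beta. fold P. set (v := Dth r ths y) in *. nra. }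
  rewrite (schwarz ths ts HU) in Htime.
  assert (E : Dth (Dt r) ths ts = GDz (r ths ts) P (Dth (Dth (Dth r)) ths ts) (gfun r ths ts) (Lfun r ts)).
  { unfold Dth at 1.
    rewrite (Derive_ext (fun x => Dt r x ts) (fun x => gage_rhs r x ts) ths (fun x => Heq x ts Hts0 Htso)).
    apply is_derive_unique. apply G_deriv; auto. }
  rewrite E in Htime.
  assert (Hr := Hpos ths ts Hts0 Htso).
  apply (grad_alg (r ths ts) P (Dth (Dth (Dth r)) ths ts) (gfun r ths ts) (Lfun r ts) (Lfun r 0)); auto.
  - now apply gfun_pos.
  - unfold P. rewrite gfun_sq. ring.
  - assert (H := r_le_L ths ts Hts0 Htso). lra.
  - now apply L_decr.
  - now apply r_le_L.
  - rewrite HP2. assert (0 <= 3 * Lfun r 0 / PI).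
    { assert (H := r_le_L 0 0 ltac:(lra) Hom). assert (Hr0 := Hpos 0 0 ltac:(lra) Hom).
      apply Rle_mult_inv_pos; lra. }
    nra.
Qed.

Lemma M0_bound : Rbar_lt (Finite 0) omega -> forall th, 0 <= th <= 2 * PI -> Rabs (Dth r th 0) <= max_abs_dr0 r.
Proof.
  intros Hom. assert (HU0 := DD_UU 0 ltac:(lra) Hom). assert (HP := PI_RGT_0).
  destruct (continuity_ab_maj (fun th => Rabs (Dth r th 0)) 0 (2 * PI)) as [mx [Hmx Hmx2]].
  lra.
  { intros th _. apply continuity_pt_filterlim. apply (continuous_Rabs_comp (fun x => Dth r x 0)).
    apply (cont_of_c2 (Dth r)). exact (c2 (false :: nil) th 0 HU0). }
  assert (Hl : is_lub_Rbar (fun y => exists th, 0 <= th <= 2 * PI /\ y = Rabs (Dth r th 0)) (Finite (Rabs (Dth r mx 0)))).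
  { split.
    - intros x [th [Hth ->]]. simpl. now apply Hmx.
    - intros b Hb. apply Hb. exists mx. split; auto. }
  unfold max_abs_dr0. rewrite (is_lub_Rbar_unique _ _ Hl). simpl.
  intros th Hth. now apply Hmx.
Qed.

Lemma final_sec : Rbar_lt (Finite 0) omega -> forall th t, 0 <= t -> Rbar_lt (Finite t) omega ->
    r th t <= Lfun r 0 / 2 /\
    Rabs (Dth r th t) <= Rmax (max_abs_dr0 r) (3 * Lfun r 0 / PI).
Proof.
  intros Hom th t Ht Hto. assert (HP := PI_RGT_0).
  split.
  - assert (H1 := r_le_L th t Ht Hto). assert (H2 := L_decr t Ht Hto). lra.
  - assert (HM := M0_bound Hom).
    set (C1 := Rmax (max_abs_dr0 r) (3 * Lfun r 0 / PI)).
    assert (Hm1 : max_abs_dr0 r <= C1) by apply Rmax_l.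
    assert (Hm2 : 3 * Lfun r 0 / PI <= C1) by apply Rmax_r.
    apply Rnot_lt_le. intros Hgt.
    set (C := (Rabs (Dth r th t) + C1) / 2).
    assert (HC1 : C1 < C) by (unfold C; lra).
    assert (HC2 : C < Rabs (Dth r th t)) by (unfold C; lra).
    assert (HMp : 0 <= max_abs_dr0 r) by (eapply Rle_trans; [apply Rabs_pos| apply (HM 0); lra]).
    assert (Hg := grad_main C Hom).
    assert (H0 : forall th, 0 <= th <= 2 * PI -> Dth r th 0 ^ 2 < C ^ 2).
    { intros x Hx. rewrite <- pow2_abs. assert (Hx2 := HM x Hx). assert (Hx3 := Rabs_pos (Dth r x 0)). nra. }
    destruct (periodic_reduce (fun x => Dth r x t) (2 * PI) ltac:(lra) (fun x => per_Dth x t Ht Hto) th) as [y [Hy E]].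
    simpl in E.
    assert (Hy2 := Hg H0 ltac:(lra) t Ht Hto y ltac:(lra)).
    rewrite <- E in Hy2. rewrite <- pow2_abs in Hy2.
    assert (0 <= C) by lra. nra.
Qed.
End Main.

Theorem lemma2p4 (r : R -> R -> R) (omega : Rbar) (c : R) :
  Rbar_lt (Finite 0) omega ->
  (exists delta : R, 0 < delta /\
     smooth_on (fun _ t => - delta < t /\ Rbar_lt (Finite t) omega) r) ->
  (forall th t, 0 <= t -> Rbar_lt (Finite t) omega ->
     r (th + 2 * PI) t = r th t) ->
  (forall th t, 0 <= t -> Rbar_lt (Finite t) omega -> 0 < r th t) ->
  (forall th t, 0 <= t -> Rbar_lt (Finite t) omega ->
     Dt r th t = gage_rhs r th t) ->
  0 < c ->
  (forall th t, 0 <= t -> Rbar_lt (Finite t) omega -> c <= r th t) ->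
  forall th t, 0 <= t -> Rbar_lt (Finite t) omega ->
    r th t <= Lfun r 0 / 2 /\
    Rabs (Dth r th t) <= Rmax (max_abs_dr0 r) (3 * Lfun r 0 / PI).
Proof.
  intros Hom [delta [Hd Hsm]] Hper Hpos Heq _ _ th t Ht Hto.
  exact (final_sec r omega delta Hd Hsm Hper Hpos Heq Hom th t Ht Hto).
Qed.
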